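(* Let $\mathcal{G}$ be a network of type $\mathcal{C}^1$ with exactly two stubborn agents $s_1,s_2$ and global communicator $m$, and let $\bar{G}_s$ be the signal flow graph derived from $\mathcal{G}$ as described in the context. Then, in $\bar{G}_s$: (1) for $i\in\{1,2\}$ and any node $e$, the sum of the path gains of all direct paths from $S_i$ to $e$ is at most $\dfrac{\beta_{s_i}(1-g_{e,e})}{1-g_{s_i,s_i}}$, and equality holds only when every simple path from $m$ to $e$ passes through $s_i$; (2) for any nodes $e,f$, the sum of the path gains of all direct paths from $e$ to $f$ is at most $\dfrac{1-g_{f,f}}{1-g_{e,e}}$, and equality holds only if every simple path from $m$ to $f$ passes through $e$.
   Context: Let $\mathcal{G}=(\mathcal{V},\mathcal{E})$, $\mathcal{V}=\{1,\dots,n\}$, be a directed graph, where an edge $(i,j)$ means information flows from $i$ to $j$. Its weighted adjacency matrix $W=[w_{ij}]$ is row-stochastic with $w_{ij}>0$ iff $(j,i)\in\mathcal{E}$ (self-loops allowed). Opinions follow the Friedkin–Johnsen model $\mathbf{x}(k+1)=(I-\beta)W\mathbf{x}(k)+\beta\mathbf{x}(0)$, $\beta=\mathrm{diag}(\beta_1,\dots,\beta_n)$, $\beta_i\in[0,1]$; exactly two agents $s_1,s_2$ are stubborn ($\beta_i>0$), with $\beta_{s_1},\beta_{s_2}\in(0,1)$. Type $\mathcal{C}^1$: $\mathcal{G}$ is strongly connected and some node $m$ lies on every cycle other than self-loops (a global communicator). A direct path is a path that does not pass through $m$. Signal flow graph: $G_s$ has nodes $1,\dots,n$ (node $i$ associated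 with the final opinion $x_i^*$ of agent $i$), two source nodes $S_1,S_2$ (initial opinions of $s_1,s_2$) and a sink $O$ (average final opinion), built from $\mathbf{x}^*=(I_n-\beta)W\mathbf{x}^*+\beta\mathbf{x}(0)$, $\bar{x}=\mathbb{1}_n^T\mathbf{x}^*/n$: for $i,j\in\{1,\dots,n\}$ there is a branch $(j,i)$ with gain $g_{i,j}=(1-\beta_i)w_{ij}$ whenever this is nonzero (so $g_{k,k}=(1-\beta_k)w_{kk}$ is the self-loop gain of $k$); there is a branch $(S_i,s_i)$ with gain $\beta_{s_i}$; and a branch $(j,O)$ with gain $1/n$ for each $j$. The graph $\bar{G}_s$ is obtained from $G_s$ by deleting every self-loop at a node $k$ and multiplying the gain of every outgoing branch of $k$ by $1/(1-g_{k,k})$. The gain of a path is the product of its branch gains (in $\bar{G}_s$); $g_{e,e}$ denotes the self-loop gain of $e$ in $G_s$. *)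

(* Defs.v *)
From mathcomp Require Import all_boot all_order all_algebra.
Set Implicit Arguments. Unset Strict Implicit. Unset Printing Implicit Defensive.
Import Order.TTheory GRing.Theory Num.Theory.
Local Open Scope ring_scope.

Definition row_stochastic (R : numDomainType) (n : nat) (W : 'M[R]_n) : Prop :=
  (forall i j, 0 <= W i j) /\ (forall i, \sum_(j < n) W i j = 1).

(* edge (j,i) of G, i.e. information flows from j to i, iff w_ij > 0 *)
Definition edgeG (R : numDomainType) (n : nat) (W : 'M[R]_n) : rel 'I_n :=
  fun j i => 0 < W i j.

Definition strongly_connected (R : numDomainType) (n : nat) (W : 'M[R]_n) : Prop :=
  forall i j : 'I_n, connect (edgeG W) i j.

(* m lies on every directed cycle of G other than self-loops
   (cycles are sequences of >= 2 distinct nodes, closed by an edge) *)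
Definition global_communicator (R : numDomainType) (n : nat) (W : 'M[R]_n)
    (m : 'I_n) : Prop :=
  forall c : seq 'I_n, (2 <= size c)%N -> uniq c -> cycle (edgeG W) c -> m \in c.

(* nodes: inl i = agent node i, inr (Some false) = S_1, inr (Some true) = S_2,
   inr None = sink O *)
Definition node (n : nat) : finType := ('I_n + option bool)%type.
Definition Ag (n : nat) (i : 'I_n) : node n := inl i.
Definition Src (n : nat) (b : bool) : node n := inr (Some b).
Definition Out (n : nat) : node n := inr None.

Definition stub (n : nat) (s1 s2 : 'I_n) (b : bool) : 'I_n := if b then s2 else s1.

(* gs x y = gain of the branch from x to y in G_s (0 if there is no branch).
   In the paper's notation g_{i,j} = gs (Ag j) (Ag i) = (1 - beta_i) w_ij. *)
Definition gs (R : numFieldType) (n : nat) (W : 'M[R]_n) (beta : 'I_n -> R)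
    (s1 s2 : 'I_n) (x y : node n) : R :=
  match x, y with
  | inl j, inl i => (1 - beta i) * W i j
  | inr (Some b), inl i => if i == stub s1 s2 b then beta i else 0
  | inl j, inr None => n%:R^-1
  | _, _ => 0
  end.

Definition brbar (R : numFieldType) (n : nat) (W : 'M[R]_n) (beta : 'I_n -> R)
    (s1 s2 : 'I_n) : rel (node n) :=
  fun x y => (x != y) && (gs W beta s1 s2 x y != 0).

Definition gbar (R : numFieldType) (n : nat) (W : 'M[R]_n) (beta : 'I_n -> R)
    (s1 s2 : 'I_n) (x y : node n) : R :=
  if x == y then 0 else gs W beta s1 s2 x y / (1 - gs W beta s1 s2 x x).

Fixpoint pgain (R : numFieldType) (T : Type) (h : T -> T -> R) (x : T) (s : seq T) : R :=
  match s with
  | [::] => 1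
  | y :: s' => h x y * pgain h y s'
  end.

Definition sfg_path (T : eqType) (br : rel T) (a b : T) (p : seq T) : bool :=
  match p with
  | x :: q => [&& x == a, q != [::], path br x q, last x q == b & uniq p]
  | [::] => false
  end.

Definition direct_path (R : numFieldType) (n : nat) (W : 'M[R]_n) (beta : 'I_n -> R)
    (s1 s2 m : 'I_n) (a b : node n) (p : seq (node n)) : bool :=
  sfg_path (brbar W beta s1 s2) a b p && (Ag m \notin p).

Definition path_gain (R : numFieldType) (n : nat) (W : 'M[R]_n) (beta : 'I_n -> R)
    (s1 s2 : 'I_n) (p : seq (node n)) : R :=
  match p with
  | x :: q => pgain (gbar W beta s1 s2) x q
  | [::] => 0
  end.

(* sum of the path gains of all direct paths from a to b in Gbar_s
   (paths are uniq, hence of size <= #|node n|, so all are enumerated) *)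
Definition direct_sum (R : numFieldType) (n : nat) (W : 'M[R]_n) (beta : 'I_n -> R)
    (s1 s2 m : 'I_n) (a b : node n) : R :=
  \sum_(k < #|{: node n}|)
    \sum_(t : k.+1.-tuple (node n) | direct_path W beta s1 s2 m a b t)
      path_gain W beta s1 s2 t.

(* Main.v *)
Require Import Defs.
From mathcomp Require Import all_boot all_order all_algebra.
From mathcomp Require Import ring lra.
Import Order.TTheory GRing.Theory Num.Theory.
Set Implicit Arguments. Unset Strict Implicit.
Local Open Scope ring_scope.

Section Gen.
Variables (R : realFieldType) (T : finType) (h : T -> T -> R).

Definition pg (s : seq T) : R := match s with x :: q => pgain h x q | [::] => 0 end.

Definition okp (A : {set T}) (a b : T) (s : seq T) : bool :=
  match s with
  | x :: q => [&& x == a, last x q == b, uniq (x :: q) & all (fun y => y \notin A) (x :: q)]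
  | [::] => false end.

Arguments okp : simpl never.

Definition Qs A a b k := \sum_(t : k.+1.-tuple T | okp A a b t) pg t.
Definition Ss A a b N := \sum_(k < N) Qs A a b k.

Lemma pgain_rcons x s y : pgain h x (rcons s y) = pgain h x s * h (last x s) y.
Proof. elim: s x => [|z s IH] x /=; first by rewrite mulr1 mul1r. by rewrite IH mulrA. Qed.

Lemma all_notin_U1 (b : T) (A : {set T}) s :
  all (fun y => y \notin b |: A) s = (b \notin s) && all (fun y => y \notin A) s.
Proof.
elim: s => [|y s IH] //=. rewrite IH in_setU1 in_cons negb_or (eq_sym b).
by case: (y == b); case: (y \in A); case: (b \in s); case: all.
Qed.

Lemma okp_memA (A : {set T}) (a b : T) (s : seq T) : (a \in A) || (b \in A) -> okp A a b s = false.
Proof.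
case: s => [|x q] // H; rewrite /okp; apply/negP; case/and4P => /eqP Ex /eqP Hl _ /allP Hall.
case/orP: H => H.
- by have := Hall a; rewrite -Ex mem_head Ex H => /(_ isT).
- by have := Hall b; rewrite -Hl mem_last Hl H => /(_ isT).
Qed.

Lemma Q0 (A : {set T}) (a b : T) : Qs A a b 0 = if (a == b) && (a \notin A) then 1 else 0.
Proof.
rewrite /Qs (reindex_onto (fun x : T => [tuple x]) (fun t : 1.-tuple T => thead t)); last first.
  by move=> t _; apply: val_inj; case: t => [[|x [|y q]] //].
case Hab: ((a == b) && (a \notin A)).
- rewrite (eq_bigl (pred1 a)) ?big_pred1_eq // => x.
  rewrite theadE eqxx andbT /okp /=.
  move/andP: Hab => [/eqP <- Ha].
  case: (eqVneq x a) => [->|Hne] /=; by rewrite ?Ha ?andbF ?andbT.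
- rewrite big_pred0 // => x. rewrite theadE eqxx andbT /okp.
  apply/negP => /and4P [/eqP Ex /eqP Eb _ /andP [Hx _]].
  by rewrite -Ex -Eb eqxx Hx in Hab.
Qed.

Lemma okp_rcons (A : {set T}) (a b y : T) r :
  okp A a b (y :: rcons r b) = (b \notin A) && okp (b |: A) a (last y r) (y :: r).
Proof.
rewrite /okp last_rcons eqxx -rcons_cons rcons_uniq all_rcons all_notin_U1.
by case: (y == a); case: (b \in A); case: (b \in y :: r); case: uniq; case: all; rewrite ?eqxx.
Qed.

Lemma Qrec (A : {set T}) (a b : T) k :
  Qs A a b k.+1 = if b \in A then 0 else \sum_u Qs (b |: A) a u k * h u b.
Proof.
rewrite /Qs (reindex_onto (fun t : k.+1.-tuple T => [tuple of rcons t b])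
   (fun t : k.+2.-tuple T => [tuple of belast (thead t) (behead t)])); last first.
  move=> t; case: t => [[|x q] //= Hq] Hok; apply: val_inj => /=.
  by move: Hok; rewrite /okp => /and4P [_ /eqP <- _ _]; rewrite -lastI.
case: ifP => HbA.
  by rewrite big_pred0 // => t; rewrite okp_memA // HbA orbT.
rewrite [in RHS](eq_bigr (fun u => \sum_(t : k.+1.-tuple T | okp (b |: A) a u t) pg t * h u b)); last by move=> u _; rewrite big_distrl.
rewrite big_mkcond /=.
under [in RHS]eq_bigr do rewrite big_mkcond /=.
rewrite exchange_big /=; apply: eq_bigr => t _.
rewrite big_mkcond /=.
case: t => [[|y r] //= Hr].
rewrite (bigD1 (last y r)) //= big1 ?addr0; last first.
  by move=> u Hu; rewrite /okp /= (eq_sym (last y r)) (negbTE Hu) andbF.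
rewrite okp_rcons HbA /=.
rewrite (_ : (_ == @Tuple k.+1 T (y :: r) Hr) = true); last first.
  by apply/eqP/val_inj; rewrite /= belast_rcons.
by rewrite andbT pgain_rcons.
Qed.

Lemma Srec (A : {set T}) (a b : T) N :
  Ss A a b N.+1 = (if (a == b) && (a \notin A) then 1 else 0) +
    (if b \in A then 0 else \sum_u Ss (b |: A) a u N * h u b).
Proof.
rewrite /Ss big_ord_recl Q0; congr (_ + _).
under eq_bigr => i _ do rewrite (Qrec A a b i).
case: ifP => _; first by rewrite big1.
rewrite exchange_big; apply: eq_bigr => u _; by rewrite /Ss big_distrl.
Qed.

Lemma Ss0 (A : {set T}) (a b : T) : Ss A a b 0 = 0.
Proof. by rewrite /Ss big_ord0. Qed.

Lemma Ss_memA (A : {set T}) (a b : T) N : (a \in A) || (b \in A) -> Ss A a b N = 0.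
Proof.
move=> H; rewrite /Ss big1 // => k _; rewrite /Qs big_pred0 // => t.
exact: okp_memA.
Qed.

Lemma Qfirst (A : {set T}) (a0 s0 b : T) (be : R) k :
  (forall y, h a0 y = if y == s0 then be else 0) -> a0 \notin A ->
  Qs A a0 b k.+1 = be * Qs (a0 |: A) s0 b k.
Proof.
move=> Hh Ha0.
rewrite /Qs (reindex_onto (fun t : k.+1.-tuple T => [tuple of a0 :: t])
   (fun t : k.+2.-tuple T => [tuple of behead t])); last first.
  move=> t; case: t => [[|x q] //= Hq] Hok; apply: val_inj => /=.
  by move: Hok; rewrite /okp /= => /andP [/eqP -> _].
rewrite mulr_sumr big_mkcond [in RHS]big_mkcond; apply: eq_bigr => t _.
case: t => [[|y r] // Hr].
rewrite (_ : (_ == @Tuple k.+1 T (y :: r) Hr) = true); last by apply/eqP/val_inj.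
rewrite andbT /okp /= Hh in_setU1 !in_cons negb_or.
case: (eqVneq y s0) => [->|Hne]; last first.
  by rewrite mul0r /=; case: ifP.
rewrite eqxx /= (negbTE Ha0) all_notin_U1 (eq_sym s0 a0).
case: (a0 == s0); case: (s0 \in A); case: (a0 \in r); case: (s0 \in r); case: uniq; case: all; case: (last _ _ == b);
  by rewrite /= ?mulr0 ?mul0r.
Qed.

Lemma Ssfirst (A : {set T}) (a0 s0 b : T) (be : R) N :
  (forall y, h a0 y = if y == s0 then be else 0) -> a0 \notin A -> a0 != b ->
  Ss A a0 b N.+1 = be * Ss (a0 |: A) s0 b N.
Proof.
move=> Hh Ha0 Hab.
rewrite /Ss big_ord_recl Q0 (negbTE Hab) /= add0r mulr_sumr.
by apply: eq_bigr => i _; rewrite (Qfirst _ _ Hh Ha0).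
Qed.
End Gen.

Section Spec.
Variables (R : realFieldType) (n : nat) (W : 'M[R]_n) (beta : 'I_n -> R) (s1 s2 : 'I_n).
Hypothesis HW0 : forall i j, 0 <= W i j.
Hypothesis HW1 : forall i, \sum_j W i j = 1.
Hypothesis Hb0 : forall i, 0 <= beta i.
Hypothesis Hb1 : forall i, beta i < 1.

Definition cc i := 1 - gs W beta s1 s2 (Ag i) (Ag i).
Hypothesis Hc : forall i, 0 < cc i.

Notation hb := (gbar W beta s1 s2).

Lemma sum_node (F : node n -> R) :
  \sum_(u : node n) F u = \sum_(i : 'I_n) F (Ag i) + \sum_(o : option bool) F (inr o).
Proof. exact: (big_sumType _ (fun _ => true) F). Qed.

Lemma gbar_ag j i : hb (Ag j) (Ag i) = if j == i then 0 else (1 - beta i) * W i j / cc j.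
Proof. by []. Qed.

Lemma gbar_src x c : hb x (Src n c) = 0.
Proof. by rewrite /gbar; case: ifP => // _; case: x => [j|[b|]] /=; rewrite mul0r. Qed.

Lemma gbar_out i : hb (Out n) (Ag i) = 0.
Proof. by rewrite /gbar /= mul0r. Qed.

Lemma gbar_from_src c y :
  hb (Src n c) y = if y == Ag (stub s1 s2 c) then beta (stub s1 s2 c) else 0.
Proof.
case: y => [i|[b|]]; rewrite /gbar /=; last 2 first.
- by rewrite mul0r; case: ifP.
- by rewrite mul0r.
have -> : (inl i == Ag (stub s1 s2 c) :> node n) = (i == stub s1 s2 c) by [].
rewrite subr0 invr1 mulr1.
by case: (eqVneq i (stub s1 s2 c)) => [->|].
Qed.

Lemma gbar_ge0 j i : 0 <= hb (Ag j) (Ag i).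
Proof.
rewrite gbar_ag; case: ifP => // _.
apply: divr_ge0; last exact: ltW.
by apply: mulr_ge0 => //; rewrite subr_ge0 ltW.
Qed.


Lemma Ss_to_src (A : {set node n}) e c N : Ss hb A (Ag e) (Src n c) N = 0.
Proof.
case: N => [|N]; first exact: Ss0.
rewrite Srec /= add0r; case: ifP => // _.
by rewrite big1 // => u _; rewrite gbar_src mulr0.
Qed.

Lemma keysum e f :
  \sum_(i : 'I_n) (cc i / cc e) * hb (Ag i) (Ag f) <= cc f / cc e.
Proof.
have Hce := Hc e.
rewrite (bigD1 f) //= gbar_ag eqxx mulr0 add0r.
rewrite (eq_bigr (fun i => (1 - beta f) / cc e * W f i)); last first.
  move=> i Hi; rewrite gbar_ag (negbTE Hi).
  have := Hc i; rewrite lt0r => /andP [Hi0 _].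
  by field; rewrite Hi0 gt_eqF.
rewrite -mulr_sumr.
have HWf := HW1 f; rewrite (bigD1 f) //= in HWf.
have -> : \sum_(i < n | i != f) W f i = 1 - W f f by rewrite -HWf addrAC subrr add0r.
rewrite /cc /= mulrAC; apply: ler_wpM2r; first by rewrite invr_ge0 ltW.
have := Hb0 f; have := Hb1 f; have := HW0 f f. nra.
Qed.

Lemma agE (i j : 'I_n) : (Ag i == Ag j :> node n) = (i == j).
Proof. by []. Qed.

Lemma sum_step (A : {set node n}) e f N :
  \sum_u Ss hb A (Ag e) u N * hb u (Ag f) =
  \sum_(i : 'I_n) Ss hb A (Ag e) (Ag i) N * hb (Ag i) (Ag f).
Proof.
rewrite sum_node [X in _ + X]big1 ?addr0 // => -[c|] _.
- by rewrite Ss_to_src mul0r.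
- by rewrite gbar_out mulr0.
Qed.

Lemma Ss_bound e N : forall (A : {set node n}) f, Ss hb A (Ag e) (Ag f) N <= cc f / cc e.
Proof.
have Hce := Hc e.
elim: N => [|N IH] A f.
  by rewrite Ss0 divr_ge0 // ltW.
rewrite Srec agE.
case: (eqVneq e f) => [<-|Hef] /=.
  rewrite divff ?gt_eqF // big1; last by move=> u _; rewrite Ss_memA ?setU11 // mul0r.
  by case: ifP => _; case: ifP => _; rewrite ?addr0 ?add0r.
rewrite add0r; case: ifP => _; first by rewrite divr_ge0 // ltW.
rewrite sum_step; apply: le_trans (keysum e f).
apply: ler_sum => i _; apply: ler_wpM2r; first exact: gbar_ge0.
exact: IH.
Qed.

Lemma gbar_gt0 j f : brbar W beta s1 s2 (Ag j) (Ag f) -> 0 < hb (Ag j) (Ag f).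
Proof.
rewrite /brbar agE => /andP [Hjf Hg]; rewrite gbar_ag (negbTE Hjf).
apply: divr_gt0; last exact: Hc.
rewrite lt0r Hg /=; apply: mulr_ge0 => //; rewrite subr_ge0 ltW //.
Qed.

Lemma Ss_strict e N : forall (A : {set node n}) f (w0 : 'I_n) (ws : seq 'I_n),
  path (fun x y => brbar W beta s1 s2 (Ag x) (Ag y)) w0 ws ->
  last w0 ws = f -> uniq (w0 :: ws) -> Ag w0 \in A ->
  all (fun w => Ag w \notin A) ws -> e \notin w0 :: ws ->
  Ss hb A (Ag e) (Ag f) N < cc f / cc e.
Proof.
have Hce := Hc e.
elim: N => [|N IH] A f w0 ws Hp Hl Hu HA Hall He.
  by rewrite Ss0 divr_gt0.
rewrite Srec agE.
have Hef : e != f.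
  by apply/eqP => Eef; move: He; rewrite Eef -Hl mem_last.
rewrite (negbTE Hef) /= add0r.
case: ifP => HfA; first by rewrite divr_gt0.
move: Hp Hl Hu Hall He; case/lastP: ws => [|ws' x] Hp Hl Hu Hall He.
  by move: Hl => /= Hl; rewrite -Hl HA in HfA.
rewrite last_rcons in Hl; subst x.
set j := last w0 ws'.
move: Hp; rewrite rcons_path => /andP [Hp' Hbr].
have Hu' : uniq (rcons (w0 :: ws') f) by [].
rewrite rcons_uniq in Hu'; case/andP: Hu' => Hfn Hu'.
have Hj : Ss hb (Ag f |: A) (Ag e) (Ag j) N < cc j / cc e.
  apply: (IH _ _ w0 ws') => //.
  - by rewrite in_setU1 HA orbT.
  - apply/allP => w Hw; rewrite in_setU1 agE negb_or.
    have -> : (w == f) = false.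
      by apply/negP => /eqP Ewf; move: Hfn; rewrite -Ewf in_cons Hw orbT.
    rewrite /=; move/allP: Hall => Hall; apply: Hall.
    by rewrite mem_rcons in_cons Hw orbT.
  - apply: contra He; rewrite -rcons_cons mem_rcons in_cons => ->; by rewrite orbT.
rewrite sum_step; apply: lt_le_trans (keysum e f).
rewrite (bigD1 j) //= [X in _ < X](bigD1 j) //=.
apply: ltr_leD.
  by rewrite ltr_pM2r // gbar_gt0.
apply: ler_sum => i _; apply: ler_wpM2r; first exact: gbar_ge0.
exact: Ss_bound.
Qed.

Lemma pgain_zero (x : node n) q : uniq (x :: q) -> ~~ path (brbar W beta s1 s2) x q ->
  pgain hb x q = 0.
Proof.
elim: q x => [|y q IH] x //= /andP [Hx Hu].
rewrite negb_and => /orP [Hb|Hp].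
- have Hxy : x != y by apply: contraNneq Hx => ->; rewrite mem_head.
  move: Hb; rewrite /brbar Hxy /= negbK => /eqP Hg.
  by rewrite /gbar (negbTE Hxy) Hg mul0r mul0r.
- by rewrite IH ?mulr0.
Qed.

Lemma all_notin_set1 (c : node n) s : all (fun y => y \notin [set c]) s = (c \notin s).
Proof. elim: s => [|y s IH] //=; by rewrite IH in_set1 in_cons negb_or eq_sym. Qed.

Lemma direct_eq m a b : a != b ->
  direct_sum W beta s1 s2 m a b = Ss hb [set Ag m] a b #|{: node n}|.
Proof.
move=> Hab; rewrite /direct_sum /Ss; apply: eq_bigr => k _.
rewrite /Qs big_mkcond [RHS]big_mkcond; apply: eq_bigr => t _.
case: t => [[|x q] // Hq].
rewrite /direct_path /sfg_path /okp /path_gain /pg.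
have -> : tval (@Tuple k.+1 _ (x :: q) Hq) = x :: q by [].
cbv iota beta.
rewrite all_notin_set1.
have Hq0 : (x == a) -> (last x q == b) -> q != [::].
  by case: q {Hq} => [|y q] //= /eqP -> /eqP E; move: Hab; rewrite E eqxx.
case Hx: (x == a); rewrite ?andFb //.
case Hl: (last x q == b); rewrite ?andFb ?andbF //.
rewrite Hq0 //.
case Hu: (uniq (x :: q)); rewrite ?andFb ?andbF //.
case Hm: (Ag m \in x :: q); rewrite ?andFb ?andbF //.
case Hp: (path (brbar W beta s1 s2) x q) => //.
by rewrite pgain_zero // Hp.
Qed.
End Spec.

Lemma in_edge (R : numDomainType) n (W : 'M[R]_n) (i x : 'I_n) :
  connect (edgeG W) x i -> x != i -> exists j, (j != i) && (0 < W i j).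
Proof.
move=> /connectP [p Hp ->] {i}.
elim: p x Hp => [|y p IH] x /=; first by rewrite eqxx.
move=> /andP [Hxy Hp] Hx.
case: (eqVneq y (last y p)) => [Ey|Hy]; last exact: IH.
by exists x; rewrite -Ey; rewrite -Ey in Hx; rewrite Hx.
Qed.

Lemma Wii_lt1 (R : numDomainType) n (W : 'M[R]_n) (i : 'I_n) :
  row_stochastic W -> (exists j, (j != i) && (0 < W i j)) -> W i i < 1.
Proof.
move=> [H0 H1] [j /andP [Hji Hj]].
have := H1 i; rewrite (bigD1 i) //= (bigD1 j) //= => E.
have Hr : 0 <= \sum_(k < n | (k != i) && (k != j)) W i k by apply: sumr_ge0.
rewrite -E; rewrite -subr_gt0 addrAC subrr add0r.
by apply: ltr_wpDr.
Qed.

Lemma agent_path (R : realFieldType) n (W : 'M[R]_n) beta s1 s2 :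
  forall q (x f : 'I_n), path (brbar W beta s1 s2) (Ag x) q -> last (Ag x) q = Ag f ->
  exists ws, q = map (@Ag n) ws.
Proof.
elim=> [|y q IH] x f /=; first by exists [::].
case: y => [j|[b|]] /=.
- move=> /andP [_ Hp] Hl; have [ws ->] := IH j f Hp Hl; by exists (j :: ws).
- by move=> /andP [/andP [_ H] _]; rewrite /gs eqxx in H.
- case: q {IH} => [|z q] //= /andP [_ /andP [Hz _]].
  by move: Hz => /andP [_ H]; rewrite /gs eqxx in H.
Qed.

Lemma direct_sum_same (R : realFieldType) n (W : 'M[R]_n) beta s1 s2 m a :
  direct_sum W beta s1 s2 m a a = 0.
Proof.
rewrite /direct_sum big1 // => k _; rewrite big_pred0 // => t.
case: t => [[|x q] // Hq].
have -> : tval (@Tuple k.+1 _ (x :: q) Hq) = x :: q by [].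
rewrite /direct_path /sfg_path; apply/negP => /andP [/and5P [/eqP Ex Hq0 _ /eqP Hl Hu] _].
case: q Hq Hq0 Hl Hu => [|y q] //= _ _ Hl /andP [Hx _].
by move: Hx; rewrite Ex -{1}Hl mem_last.
Qed.

Lemma Ag_inj n : injective (@Ag n).
Proof. by move=> x y []. Qed.

Lemma sfg_agents (R : realFieldType) n (W : 'M[R]_n) beta s1 s2 (m e : 'I_n) p :
  sfg_path (brbar W beta s1 s2) (Ag m) (Ag e) p ->
  exists ws, [/\ p = map (@Ag n) (m :: ws),
    path (fun x y => brbar W beta s1 s2 (Ag x) (Ag y)) m ws,
    last m ws = e & uniq (m :: ws)].
Proof.
case: p => [|x q] //= /and5P [/eqP -> _ Hp /eqP Hl Hu].
have [ws Eq] := agent_path Hp Hl; subst q.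
exists ws; split.
- by [].
- by rewrite path_map in Hp.
- by apply: Ag_inj; rewrite -Hl last_map.
- by move: Hu; rewrite (mem_map (@Ag_inj n)) (map_inj_uniq (@Ag_inj n)).
Qed.

Unset Implicit Arguments.

Theorem lemma3 (R : realFieldType) (n : nat) (W : 'M[R]_n) (beta : 'I_n -> R)
    (s1 s2 m : 'I_n) :
  row_stochastic W ->
  s1 != s2 ->
  0 < beta s1 < 1 -> 0 < beta s2 < 1 ->
  (forall i, i != s1 -> i != s2 -> beta i = 0) ->
  strongly_connected W ->
  global_communicator W m ->
  (forall (b : bool) (e : 'I_n),
     let g := gs W beta s1 s2 in
     let bound := beta (stub s1 s2 b) * (1 - g (Ag e) (Ag e))
                  / (1 - g (Ag (stub s1 s2 b)) (Ag (stub s1 s2 b))) in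
     direct_sum W beta s1 s2 m (Src n b) (Ag e) <= bound /\
     (direct_sum W beta s1 s2 m (Src n b) (Ag e) = bound ->
      forall p : seq (node n), sfg_path (brbar W beta s1 s2) (Ag m) (Ag e) p ->
        Ag (stub s1 s2 b) \in p)) /\
  (forall e f : 'I_n,
     let g := gs W beta s1 s2 in
     let bound := (1 - g (Ag f) (Ag f)) / (1 - g (Ag e) (Ag e)) in
     direct_sum W beta s1 s2 m (Ag e) (Ag f) <= bound /\
     (direct_sum W beta s1 s2 m (Ag e) (Ag f) = bound ->
      forall p : seq (node n), sfg_path (brbar W beta s1 s2) (Ag m) (Ag f) p ->
        Ag e \in p)).
Proof.
move=> HRS Hs12 /andP [Hb10 Hb11] /andP [Hb20 Hb21] Hbo Hsc _.
case: (HRS) => HW0 HW1.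
have Hb0 : forall i, 0 <= beta i.
  move=> i; case: (eqVneq i s1) => [->|H1]; first exact: ltW.
  case: (eqVneq i s2) => [->|H2]; first exact: ltW.
  by rewrite Hbo.
have Hb1 : forall i, beta i < 1.
  move=> i; case: (eqVneq i s1) => [->|H1] //.
  case: (eqVneq i s2) => [->|H2] //.
  by rewrite Hbo // ltr01.
have Hwii : forall i, W i i < 1.
  move=> i; apply: Wii_lt1 => //.
  case: (eqVneq s1 i) => [E|H]; last exact: (in_edge (Hsc s1 i) H).
  by apply: (in_edge (Hsc s2 i)); rewrite -E eq_sym.
have Hc : forall i, 0 < cc W beta s1 s2 i.
  move=> i; rewrite /cc /= subr_gt0.
  have := Hb0 i; have := Hb1 i; have := HW0 i i; have := Hwii i; nra.
have Hbs : forall c, 0 < beta (stub s1 s2 c) by case.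
split.
- move=> c e g bound.
  rewrite /bound /g -/(cc W beta s1 s2 e) -/(cc W beta s1 s2 (stub s1 s2 c)).
  set s := stub s1 s2 c.
  have Hce := Hc e; have Hcs := Hc s; have Hbs' := Hbs c.
  rewrite direct_eq //.
  move: #|{: node n}| => [|N].
    rewrite Ss0.
    have Hpos : 0 < beta s * cc W beta s1 s2 e / cc W beta s1 s2 s by rewrite divr_gt0 ?mulr_gt0.
    split; first exact: ltW.
    by move=> E; rewrite -E ltxx in Hpos.
  have Hh := gbar_from_src W beta s1 s2 c.
  rewrite (@Ssfirst _ _ _ _ _ _ _ _ _ Hh) //; last by rewrite in_set1.
  set X := Ss _ _ _ _ _.
  have HX : X <= cc W beta s1 s2 e / cc W beta s1 s2 s by apply: Ss_bound.
  split; first by rewrite -mulrA; apply: ler_wpM2l => //; exact: ltW.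
  move=> E p Hp; apply/negPn/negP => Hsp.
  have EX : X = cc W beta s1 s2 e / cc W beta s1 s2 s.
    by apply: (mulfI (lt0r_neq0 Hbs')); rewrite E mulrA.
  have [ws [Ep Hpw Hlw Huw]] := sfg_agents Hp.
  have : X < cc W beta s1 s2 e / cc W beta s1 s2 s.
    apply: (@Ss_strict _ _ _ _ _ _ HW0 HW1 Hb0 Hb1 Hc _ _ _ _ m ws) => //.
    - by rewrite in_setU1 in_set1 eqxx orbT.
    - apply/allP => w Hw; rewrite in_setU1 in_set1 negb_or /= agE.
      by apply: contraNneq (proj1 (andP Huw)) => <-.
    - by move: Hsp; rewrite Ep (mem_map (@Ag_inj n)).
  by rewrite EX ltxx.
- move=> e f g bound.
  rewrite /bound /g -/(cc W beta s1 s2 e) -/(cc W beta s1 s2 f).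
  have Hce := Hc e.
  case: (eqVneq e f) => [<-|Hef].
    rewrite direct_sum_same divff ?gt_eqF //; split; first exact: ler01.
    by move=> /eqP; rewrite eq_sym oner_eq0.
  rewrite direct_eq ?agE //.
  split; first exact: Ss_bound.
  move=> E p Hp; apply/negPn/negP => Hep.
  have [ws [Ep Hpw Hlw Huw]] := sfg_agents Hp.
  have : Ss (gbar W beta s1 s2) [set Ag m] (Ag e) (Ag f) #|{: node n}| <
         cc W beta s1 s2 f / cc W beta s1 s2 e.
    apply: (@Ss_strict _ _ _ _ _ _ HW0 HW1 Hb0 Hb1 Hc _ _ _ _ m ws) => //.
    - by rewrite in_set1.
    - apply/allP => w Hw; rewrite in_set1 agE.
      by apply: contraNneq (proj1 (andP Huw)) => <-.
    - by move: Hep; rewrite Ep (mem_map (@Ag_inj n)).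
  by rewrite E ltxx.
Qed.
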